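(* Consider a finite reward-free MDP with occupancy polytope $\Phi$, let $d_e^\star\in\Phi$ be the occupancy measure of an optimal demonstrator, and let $\mathcal D=\{(d_e^k,\epsilon^k)\}_{k=1}^K$ be a dataset with $d_e^k\in\Phi$, $\epsilon^k\ge0$ and $\mathcal R(\mathcal D)\neq\emptyset$. Then \[ \mathrm{Gap}\big(\mathcal R(\mathcal D),\mathcal R(d_e^\star)\big)\le\min_{(d,\epsilon)\in\mathrm{conv}(\mathcal D)}\big\{\|d-d_e^\star\|_1+\epsilon\big\}, \] where $\mathrm{conv}(\mathcal D)$ is the convex hull of the pairs $(d_e^k,\epsilon^k)$, $k\in[K]$, viewed as points of $\mathbb R^{S\times A}\times\mathbb R$.
   Context: The MDP has finite state set $S$, finite action set $A$, transitions $P(s'\mid s,a)$, initial distribution $\mu_0$, discount $\gamma\in(0,1)$; $M$ is defined by $(Md)(s)=\sum_a d(s,a)-\gamma\sum_{s',a'}P(s\mid s',a')d(s',a')$ and $\Phi=\{d\ge0:Md=(1-\gamma)\mu_0\}$. Rewards are $r\in\Delta(S\times A)$ (probability simplex). $\mathrm{subopt}(r,d):=\max_{\tilde d\in\Phi}r^\top\tilde d-r^\top d$. $\mathcal R(\mathcal D):=\{r\in\Delta(S\times A):\mathrm{subopt}(r,d_e^k)\le\epsilon^k\ \forall k\}$; $\mathcal R(d_e^\star):=\{r\in\Delta(S\times A):\mathrm{subopt}(r,d_e^\star)=0\}$. For a set of rewards $\mathcal R$, $\mathrm{Gap}(\mathcal R,\mathcal R(d_e^\star)):=\max_{r\in\mathcal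 R}\mathrm{subopt}(r,d_e^\star)$. *)

(* Defs.v *)
From HB Require Import structures.
From mathcomp Require Import all_boot all_order all_algebra.
From mathcomp Require Import all_classical all_reals.
Set Implicit Arguments. Unset Strict Implicit. Unset Printing Implicit Defensive.
Import Order.TTheory GRing.Theory Num.Theory.
Local Open Scope ring_scope.
Local Open Scope classical_set_scope.

Section MDP.
Variables (R : realType) (S A : finType).

Local Notation vecSA := {ffun S * A -> R}.

(* P s' s a = P(s' | s, a) *)
Definition Mop (gamma : R) (P : S -> S -> A -> R) (d : vecSA) (s : S) : R :=
  \sum_(a : A) d (s, a) - gamma * \sum_(sa : S * A) P s sa.1 sa.2 * d sa.

Definition Phi (gamma : R) (P : S -> S -> A -> R) (mu0 : S -> R) : set vecSA :=
  [set d : vecSA | (forall x, 0 <= d x) /\ forall s, Mop gamma P d s = (1 - gamma) * mu0 s].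

Definition rewards : set vecSA :=
  [set r : vecSA | (forall x, 0 <= r x) /\ \sum_x r x = 1].

Definition dotSA (r d : vecSA) : R := \sum_x r x * d x.

Definition subopt gamma P mu0 (r d : vecSA) : R :=
  sup [set dotSA r d' | d' in Phi gamma P mu0] - dotSA r d.

Definition RD gamma P mu0 (K : nat) (de : 'I_K -> vecSA) (eps : 'I_K -> R) : set vecSA :=
  [set r : vecSA | rewards r /\ forall k, subopt gamma P mu0 r (de k) <= eps k].

Definition Rstar gamma P mu0 (dstar : vecSA) : set vecSA :=
  [set r : vecSA | rewards r /\ subopt gamma P mu0 r dstar = 0].

Definition Gap gamma P mu0 (Rset : set vecSA) (dstar : vecSA) : R :=
  sup [set subopt gamma P mu0 r dstar | r in Rset].

Definition convD (K : nat) (de : 'I_K -> vecSA) (eps : 'I_K -> R) : set (vecSA * R) :=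
  [set p : vecSA * R | exists lam : 'I_K -> R,
      [/\ forall k, 0 <= lam k, \sum_k lam k = 1,
          p.1 = [ffun x => \sum_k lam k * de k x] & p.2 = \sum_k lam k * eps k]].

Definition norm1 (d : vecSA) : R := \sum_x `|d x|.

End MDP.

(* Main.v *)
Require Import Defs.
From HB Require Import structures.
From mathcomp Require Import all_boot all_order all_algebra.
From mathcomp Require Import all_classical all_reals.
Import Order.TTheory GRing.Theory Num.Theory.
Local Open Scope ring_scope.
Local Open Scope classical_set_scope.

Theorem mainTheorem2 (R : realType) (S A : finType)
  (P : S -> S -> A -> R) (mu0 : S -> R) (gamma : R)
  (K : nat) (de : 'I_K -> {ffun S * A -> R}) (eps : 'I_K -> R) (dstar : {ffun S * A -> R}) :
  (forall s a s', 0 <= P s' s a) ->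
  (forall s a, \sum_(s' : S) P s' s a = 1) ->
  (forall s, 0 <= mu0 s) -> \sum_(s : S) mu0 s = 1 ->
  0 < gamma < 1 ->
  (0 < K)%N ->
  Phi gamma P mu0 dstar ->
  (forall k, Phi gamma P mu0 (de k)) ->
  (forall k, 0 <= eps k) ->
  RD gamma P mu0 de eps !=set0 ->
  Gap gamma P mu0 (RD gamma P mu0 de eps) dstar <=
    inf [set norm1 [ffun x => p.1 x - dstar x] + p.2 | p in convD de eps].
Proof.
move=> _ _ _ _ _ K0 _ _ _ [r0 Hr0].
apply: ge_sup; first by exists (subopt gamma P mu0 r0 dstar); exists r0.
move=> _ [r [[rge0 rsum] Hk] <-].
apply: lb_le_inf.
  pose k0 : 'I_K := Ordinal K0.
  pose lam := fun k : 'I_K => (k == k0)%:R : R.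
  exists (norm1 [ffun x => (de k0 x) - dstar x] + eps k0).
  exists (de k0, eps k0) => //.
  exists lam; split.
  - by move=> k; rewrite /lam ler0n.
  - by rewrite (bigD1 k0) //= big1 ?addr0 /lam ?eqxx // => k /negbTE ->.
  - apply/ffunP => x /=; rewrite ffunE (bigD1 k0) //= big1 ?addr0 /lam ?eqxx ?mul1r //.
    by move=> k /negbTE ->; rewrite mul0r.
  - by rewrite (bigD1 k0) //= big1 ?addr0 /lam ?eqxx ?mul1r // => k /negbTE ->; rewrite mul0r.
move=> _ [p [lam [lam0 lam1 Hp1 Hp2]] <-].
rewrite /subopt; set V := sup _.
have rle1 : forall x, r x <= 1.
  move=> x; rewrite -rsum (bigD1 x) //= lerDl sumr_ge0 //.
have H1 : V - dotSA r p.1 <= p.2.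
  have -> : V - dotSA r p.1 = \sum_k lam k * (V - dotSA r (de k)).
    rewrite /dotSA Hp1.
    transitivity (\sum_k (lam k * V - \sum_x r x * (lam k * de k x))); last first.
      apply: eq_bigr => k _; rewrite mulrBr big_distrr /=; congr (_ - _).
      by apply: eq_bigr => x _; rewrite mulrCA.
    rewrite sumrB -big_distrl /= lam1 mul1r; congr (_ - _).
    under eq_bigr do rewrite ffunE big_distrr /=.
    by rewrite exchange_big.
  rewrite Hp2; apply: ler_sum => k _; apply: ler_wpM2l => //.
  exact: Hk.
have H2 : dotSA r p.1 - dotSA r dstar <= norm1 [ffun x => p.1 x - dstar x].
  rewrite /dotSA /norm1 -sumrB; apply: ler_sum => x _.
  rewrite ffunE -mulrBr.
  apply: (le_trans (ler_norm _)); rewrite normrM ger0_norm //.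
  by rewrite ler_piMl.
have -> : V - dotSA r dstar = (V - dotSA r p.1) + (dotSA r p.1 - dotSA r dstar) by rewrite addrA subrK.
rewrite addrC; exact: lerD.
Qed.
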